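(* Let $U\subseteq\mathbb{R}^n$ be an $n$-dimensional compact convex set, and let $x_0,\ldots,x_n\in\partial U$ be affinely independent (so they are the vertices of an $n$-simplex). Then for each $u\in U$ there exists $m\in\{0,\ldots,n\}$ such that the straight line $\ell_{u,x_m}$ through $u$ and $x_m$ intersects the affine hull $\mathrm{aff}(\{x_0,\ldots,x_n\}\setminus\{x_m\})$ at a point of $U$. *)

(* Defs.v *)
From HB Require Import structures.
From mathcomp Require Import all_boot all_order all_algebra.
From mathcomp Require Import all_classical all_reals all_analysis.
Set Implicit Arguments. Unset Strict Implicit. Unset Printing Implicit Defensive.
Import Order.TTheory GRing.Theory Num.Theory.
Import numFieldNormedType.Exports.
Local Open Scope classical_set_scope.
Local Open Scope ring_scope.

Definition convex_vset (R : realType) (n : nat) (U : set 'rV[R]_n) : Prop :=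
  forall x y (t : R), U x -> U y -> 0 <= t -> t <= 1 -> U (t *: x + (1 - t) *: y).

Definition aff_hull (R : realType) (n : nat) (A : set 'rV[R]_n) : set 'rV[R]_n :=
  [set x | exists (k : nat) (p : 'I_k -> 'rV[R]_n) (w : 'I_k -> R),
      (forall i, A (p i)) /\ \sum_(i < k) w i = 1 /\ x = \sum_(i < k) w i *: p i].

Definition full_dim (R : realType) (n : nat) (U : set 'rV[R]_n) : Prop :=
  aff_hull U = setT.

Definition boundary (R : realType) (n : nat) (U : set 'rV[R]_n) : set 'rV[R]_n :=
  closure U `\` interior U.

Definition aff_indep (R : realType) (n k : nat) (x : 'I_k -> 'rV[R]_n) : Prop :=
  forall w : 'I_k -> R, \sum_(i < k) w i = 0 -> \sum_(i < k) w i *: x i = 0 ->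
    forall i, w i = 0.

Definition line_through (R : realType) (n : nat) (u v : 'rV[R]_n) : set 'rV[R]_n :=
  [set u + t *: (v - u) | t in [set: R]].

(* Main.v *)
Require Import Defs.
From HB Require Import structures.
From mathcomp Require Import all_boot all_order all_algebra.
From mathcomp Require Import all_classical all_reals all_analysis.
From mathcomp Require Import ring lra.
Import Order.TTheory GRing.Theory Num.Theory.
Import numFieldNormedType.Exports.
Local Open Scope classical_set_scope.
Local Open Scope ring_scope.

Lemma bary {R : realType} {n : nat} {x : 'I_n.+1 -> 'rV[R]_n}
  : aff_indep x -> forall u : 'rV[R]_n, exists l : 'I_n.+1 -> R,
    \sum_i l i = 1 /\ u = \sum_i l i *: x i.
Proof.
move=> hx u.
pose X : 'M[R]_(n.+1, n) := \matrix_i x i.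
pose M : 'M[R]_(n.+1, 1 + n) := row_mx (const_mx 1 : 'M[R]_(n.+1, 1)) X.
have key : forall w : 'rV[R]_n.+1, w *m M = row_mx (\sum_i w 0 i)%:M (\sum_i w 0 i *: x i).
  move=> w; have E := mul_mx_row w (const_mx 1 : 'M[R]_(n.+1,1)) X; rewrite /M; rewrite E; f_equal.
    apply/matrixP => i j; rewrite !ord1 !mxE; rewrite /= mulr1n.
    by apply: eq_bigr => k _; rewrite mxE mulr1.
  by rewrite mulmx_sum_row; apply: eq_bigr => k _; rewrite rowK.
have hM : (M : 'M[R]_n.+1) \in unitmx.
  rewrite -row_free_unit -(kermx_eq0 M); apply/eqP/row_matrixP => i.
  have := congr1 (row i) (mulmx_ker M); rewrite row_mul row0 => h.
  move: h; set w := row i (kermx M); rewrite key => /eqP; rewrite row_mx_eq0.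
  case/andP => /eqP h1 /eqP h2.
  have h1' : \sum_k w 0 k = 0.
    by move/matrixP: h1 => /(_ 0 0); rewrite !mxE /= mulr1n.
  apply/rowP => k; transitivity (0:R); last by rewrite mxE.
  exact: (hx (fun k => w 0 k) h1' h2 k).
pose v : 'rV[R]_n.+1 := row_mx (1%:M : 'M[R]_1) u.
pose w := v *m invmx M.
have hw : w *m M = v by rewrite /w mulmxKV.
move: hw; rewrite key /v => /eq_row_mx [h1 h2].
exists (fun k => w 0 k); split=> //.
by move/matrixP: h1 => /(_ 0 0); rewrite !mxE /= !mulr1n.
Qed.

Lemma convex_sum (R : realType) (n : nat) (U : set 'rV[R]_n) :
  convex_vset U -> forall k (p : 'I_k -> 'rV[R]_n) (w : 'I_k -> R),
  (forall i, U (p i)) -> (forall i, 0 <= w i) -> \sum_i w i = 1 ->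
  U (\sum_i w i *: p i).
Proof.
move=> hU; elim=> [|k IH] p w hp hw hs.
  by move: hs; rewrite big_ord0 => /eqP; rewrite eq_sym oner_eq0.
rewrite big_ord_recl; move: hs; rewrite big_ord_recl.
set s := \sum_(i < k) w (lift ord0 i) => hs.
have s0 : 0 <= s by apply: sumr_ge0 => i _.
have [sz|snz] := eqVneq s 0.
  have wz : forall i, w (lift ord0 i) = 0.
    by move=> i; apply: (psumr_eq0P (P := xpredT) (F := fun j => w (lift ord0 j))) => // j _.
  rewrite big1 ?addr0; last by move=> i _; rewrite wz scale0r.
  by move: hs; rewrite sz addr0 => ->; rewrite scale1r.
have spos : 0 < s by rewrite lt_def snz.
have := IH (fun i => p (lift ord0 i)) (fun i => w (lift ord0 i) / s).
move=> /(_ (fun i => hp _)) /(_ (fun i => divr_ge0 (hw _) s0)).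
rewrite -mulr_suml mulfV // => /(_ erefl) Uq.
have := hU _ _ (w ord0) (hp ord0) Uq (hw ord0).
have -> : 1 - w ord0 = s by rewrite -hs addrC addKr.
have -> : w ord0 <= 1 by rewrite -hs lerDl.
move=> /(_ isT); congr U; congr (_ + _).
rewrite scaler_sumr; apply: eq_bigr => i _; rewrite scalerA mulrCA.
by rewrite mulfV // mulr1.
Qed.

Theorem lemma6p2 (R : realType) (n : nat) (U : set 'rV[R]_n)
  (x : 'I_n.+1 -> 'rV[R]_n) :
  compact U -> convex_vset U -> full_dim U ->
  (forall i, boundary U (x i)) -> aff_indep x ->
  forall u, U u ->
  exists m : 'I_n.+1, exists p,
    U p /\ line_through u (x m) p /\
    aff_hull [set x j | j in [set j : 'I_n.+1 | j != m]] p.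
Proof.
move=> cU hconv _ hb hind u Uu.
have xU : forall i, U (x i).
  by move=> i; apply: (compact_closed (@norm_hausdorff _ _) cU); case: (hb i).
have [l [hl hu]] := bary hind u.
have facts : forall m, l m != 1 ->
   let c := (1 - l m)^-1 in
   \sum_(j < n) c * l (lift m j) = 1 /\
   c *: (u - l m *: x m) = \sum_(j < n) (c * l (lift m j)) *: x (lift m j).
  move=> m lm1 c.
  have cne : 1 - l m != 0 by rewrite subr_eq0 eq_sym.
  move: hl hu; rewrite (bigD1_ord m) //= (bigD1_ord m) //= => hl hu.
  split.
    rewrite -mulr_sumr; have -> : \sum_(i < n) l (lift m i) = 1 - l m.
      by rewrite -hl addrAC subrr add0r.
    by rewrite mulVf.
  rewrite hu addrAC subrr add0r scaler_sumr; apply: eq_bigr => j _.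
  by rewrite scalerA.
have good : forall m, l m != 1 -> U ((1 - l m)^-1 *: (u - l m *: x m)) ->
    exists m : 'I_n.+1, exists p,
    U p /\ line_through u (x m) p /\
    aff_hull [set x j | j in [set j : 'I_n.+1 | j != m]] p.
  move=> m lm1 Up; exists m; exists ((1 - l m)^-1 *: (u - l m *: x m)).
  have [hs hp] := facts m lm1.
  have cne : 1 - l m != 0 by rewrite subr_eq0 eq_sym.
  split=> //; split.
    exists (- l m / (1 - l m)) => //.
    set t := - l m / (1 - l m); set c := (1 - l m)^-1.
    have hc : c * l m = - t by rewrite /t /c; field.
    have ht : c = 1 - t by rewrite /t /c; field.
    rewrite scalerBr scalerBr scalerA hc scaleNr opprK ht scalerBl scale1r.
    by rewrite addrCA [RHS]addrC.
  exists n, (fun j => x (lift m j)), (fun j => (1 - l m)^-1 * l (lift m j)).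
  split; first by move=> j; exists (lift m j) => //=; rewrite eq_sym; exact: neq_lift.
  by split.
have [[m lm0]|] := pselect (exists m, l m <= 0).
  have lm1 : l m != 1 by apply: contraTneq lm0 => ->; rewrite ler10.
  apply: (good m lm1).
  have cne : 1 - l m != 0 by rewrite subr_eq0 eq_sym.
  have lm1' : 0 < 1 - l m by lra.
  have h0 : 0 <= - l m / (1 - l m) by apply: divr_ge0; [rewrite oppr_ge0 | exact: ltW].
  have h1 : - l m / (1 - l m) <= 1 by rewrite ler_pdivrMr // mul1r; lra.
  have := hconv (x m) u _ (xU m) Uu h0 h1.
  suff -> : (1 - l m)^-1 *: (u - l m *: x m) =
     (- l m / (1 - l m)) *: x m + (1 - - l m / (1 - l m)) *: u by [].
  set t := - l m / (1 - l m); set c := (1 - l m)^-1.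
  have hc : c * l m = - t by rewrite /t /c; field.
  have ht : 1 - t = c by rewrite /t /c; field.
  by rewrite ht scalerBr scalerA hc scaleNr opprK addrC.
move=> hpos.
have lpos : forall i, 0 < l i.
  by move=> i; rewrite ltNge; apply/negP => h; apply: hpos; exists i.
have [n0|nn0] := eqVneq n 0.
  subst n; exfalso; case: (hb ord0) => _; apply.
  have -> : U = setT.
    by apply/seteqP; split=> // y _; rewrite (thinmx0 y) -(thinmx0 u).
  by rewrite interiorT.
have n0' : (0 < n)%N by rewrite lt0n.
pose j0 : 'I_n := Ordinal n0'.
have hrest : 0 < \sum_(i < n) l (lift ord0 i).
  rewrite (bigD1 j0) //=.
  have : 0 <= \sum_(i < n | i != j0) l (lift ord0 i) by apply: sumr_ge0 => i _; exact: ltW.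
  have := lpos (lift ord0 j0); lra.
have hl' := hl; rewrite (bigD1_ord ord0) //= in hl'.
have l01 : l ord0 < 1 by lra.
have lm1 : l ord0 != 1 by rewrite lt_eqF.
apply: (good ord0 lm1).
have [hs hp] := facts ord0 lm1.
rewrite hp; apply: convex_sum => // i.
by rewrite mulr_ge0 ?invr_ge0 ?ltW ?subr_gt0 ?lpos.
Qed.
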